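(* Let $A$ be an $n\times n$ matrix with a designated set of large positions, and let $(X,Y)$ be a restriction with $m=|X|\ge2$ that is $q$-good for some $q<\frac{1}{m(m-1)}$. Then $(X,Y)$ has a $0$-strong line, i.e. a row $i\in X$ with $(i,j)$ large for all $j\in Y$, or a column $j\in Y$ with $(i,j)$ large for all $i\in X$.
   Context: Let $A=(a_{ij})_{i,j\in[n]}$ with a designated set $L\subseteq[n]\times[n]$ of large positions. A restriction is $(X,Y)$ with $X,Y\subseteq[n]$, $|X|=|Y|$; a generalized diagonal of $A[X,Y]$ is $\{(i,\sigma(i)):i\in X\}$ for a bijection $\sigma:X\to Y$, random meaning uniform $\sigma$; it is good if it contains exactly one large position; $(X,Y)$ is $q$-good if a random generalized diagonal is good with probability $\ge1-q$. *)

(* Defs.v *)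
From HB Require Import structures.
From mathcomp Require Import all_boot all_order all_algebra.
Set Implicit Arguments. Unset Strict Implicit. Unset Printing Implicit Defensive.
Import Order.TTheory GRing.Theory Num.Theory.
Local Open Scope ring_scope.

(* Rows/columns are indexed by 'I_n; the large positions form L : {set 'I_n * 'I_n}.
   A restriction (X, Y) has X Y : {set 'I_n} with #|X| = #|Y|. *)

Definition elX n (X : {set 'I_n}) := {i : 'I_n | i \in X}.

(* Bijections sigma : X -> Y, as finite functions on X with values in 'I_n
   that land in Y and are injective (hence bijective when #|X| = #|Y|). *)
Definition bijections n (X Y : {set 'I_n}) : {set {ffun elX X -> 'I_n}} :=
  [set f : {ffun elX X -> 'I_n} | [forall x, f x \in Y] && injectiveb f].

Definition good_diag n (L : {set 'I_n * 'I_n}) (X : {set 'I_n})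
    (f : {ffun elX X -> 'I_n}) : bool :=
  #|[set x : elX X | (val x, f x) \in L]| == 1%N.

Definition prob_good (R : realFieldType) n (L : {set 'I_n * 'I_n})
    (X Y : {set 'I_n}) : R :=
  (#|[set f in bijections X Y | good_diag L f]|)%:R / (#|bijections X Y|)%:R.

Definition q_good (R : realFieldType) n (L : {set 'I_n * 'I_n})
    (X Y : {set 'I_n}) (q : R) : Prop :=
  (1 - q <= prob_good R L X Y)%R.

Definition has_0strong_line n (L : {set 'I_n * 'I_n}) (X Y : {set 'I_n}) : Prop :=
  (exists2 i, i \in X & forall j, j \in Y -> (i, j) \in L) \/
  (exists2 j, j \in Y & forall i, i \in X -> (i, j) \in L).

(* Main.v *)
Require Import Defs.
From HB Require Import structures.
From mathcomp Require Import all_boot all_order all_algebra all_fingroup.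
From mathcomp Require Import ring lra.
Import Order.TTheory GRing.Theory Num.Theory.
Local Open Scope ring_scope.

Section Counting.
Variables (n : nat) (X Y : {set 'I_n}).
Variables (a c : elX X) (b d : 'I_n).
Hypotheses (ac : a != c) (bd : b != d) (bY : b \in Y) (dY : d \in Y).

Definition tau (f : {ffun elX X -> 'I_n}) (y : 'I_n) : 'I_n :=
  tperm (tperm (f a) b (f c)) d (tperm (f a) b y).

Definition Phi (f : {ffun elX X -> 'I_n}) : {ffun elX X -> 'I_n} :=
  [ffun x => tau f (f x)].

Definition Sfib : {set {ffun elX X -> 'I_n}} :=
  [set f in bijections X Y | (f a == b) && (f c == d)].

Definition Pairs : {set 'I_n * 'I_n} :=
  setX Y Y :\: [set (y, y) | y in Y].

Lemma tau_inj f : injective (tau f).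
Proof.
move=> y z; rewrite /tau => /(can_inj (tpermK _ _)) /(can_inj (tpermK _ _)).
done.
Qed.

Lemma tpermY u v y : u \in Y -> v \in Y -> y \in Y -> tperm u v y \in Y.
Proof. by move=> uY vY yY; case: tpermP => // ->. Qed.

Lemma Phi_S f : f \in bijections X Y -> Phi f \in Sfib.
Proof.
rewrite /bijections !inE => /andP[/forallP fY /injectiveP finj].
have fab : f a != f c by apply: contra ac => /eqP /finj ->.
apply/andP; split; [apply/andP; split|].
- apply/forallP => x; rewrite ffunE /tau.
  by apply: tpermY => //; apply: tpermY => //; apply: tpermY.
- by apply/injectiveP => x y; rewrite !ffunE => /tau_inj /finj.
- rewrite !ffunE /tau tpermL tpermL eqxx andbT.
  have hb : tperm (f a) b (f c) != b.
    by rewrite -{2}(tpermL (f a) b) (inj_eq (can_inj (tpermK _ _))) eq_sym.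
  by rewrite tpermD // eq_sym.
Qed.

Lemma card_Pairs : #|Pairs| = (#|Y| * #|Y| - #|Y|)%N.
Proof.
rewrite /Pairs cardsD cardsX (setIidPr _).
  by rewrite card_imset // => y z [].
apply/subsetP => p /imsetP [y yY ->]; by rewrite inE /= yY.
Qed.

Lemma card_bij : (#|bijections X Y| <= #|Sfib| * #|Pairs|)%N.
Proof.
pose psi := fun f : {ffun elX X -> 'I_n} => (Phi f, (f a, f c)).
have psi_inj : injective psi.
  move=> f g [eP ea ec].
  have et : tau f =1 tau g by move=> y; rewrite /tau ea ec.
  apply/ffunP => x.
  have := congr1 (fun h : {ffun elX X -> 'I_n} => h x) eP; rewrite !ffunE et.
  exact: tau_inj.
rewrite -cardsX -(card_imset _ psi_inj); apply: subset_leq_card.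
apply/subsetP => p /imsetP [f fB ->]; rewrite inE /= Phi_S //=.
move: fB; rewrite /bijections !inE => /andP[/forallP fY /injectiveP finj].
rewrite !fY /= andbT; apply/imsetP => -[y _ [e1 e2]].
by move: ac; rewrite -(inj_eq finj) e1 e2 eqxx.
Qed.

End Counting.

Lemma two_elems (T : finType) (A : {set T}) : (1 < #|A|)%N ->
  exists x y, [/\ x \in A, y \in A & x != y].
Proof.
move=> h; have : (0 < #|A|)%N by apply: leq_trans h.
case/card_gt0P => x xA.
have : (0 < #|A :\ x|)%N by move: h; rewrite (cardsD1 x A) xA.
case/card_gt0P => y; rewrite !inE => /andP[yx yA].
by exists x, y; split; rewrite // eq_sym.
Qed.

Lemma config n (L : {set 'I_n * 'I_n}) (X Y : {set 'I_n}) :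
  ~ has_0strong_line L X Y -> (2 <= #|X|)%N -> #|X| = #|Y| ->
  exists (a c : elX X) (b d : 'I_n),
    [/\ a != c, b != d, b \in Y, d \in Y &
     forall f : {ffun elX X -> 'I_n}, f \in bijections X Y ->
       f a = b -> f c = d -> ~~ good_diag L f].
Proof.
move=> Hn h2 XY.
have rowN : forall i, i \in X -> exists2 j, j \in Y & (i, j) \notin L.
  move=> i iX; have : ~~ [forall j in Y, (i, j) \in L].
    by apply/negP => /forall_inP H; apply: Hn; left; exists i.
  by case/forall_inPn => j jY jL; exists j.
have colN : forall j, j \in Y -> exists2 i, i \in X & (i, j) \notin L.
  move=> j jY; have : ~~ [forall i in X, (i, j) \in L].
    by apply/negP => /forall_inP H; apply: Hn; right; exists j.
  by case/forall_inPn => i iX iL; exists i.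
have small : forall f : {ffun elX X -> 'I_n},
    (forall x, (val x, f x) \notin L) -> ~~ good_diag L f.
  move=> f H; rewrite /good_diag.
  suff -> : [set x : elX X | (val x, f x) \in L] = set0 by rewrite cards0.
  by apply/setP => x; rewrite !inE (negbTE (H x)).
case: (boolP [exists p : 'I_n * 'I_n, [&& p.1 \in X, p.2 \in Y & p \in L]]).
- case/existsP => -[i j] /and3P [/= iX jY ijL].
  case: (boolP [exists p : 'I_n * 'I_n,
      [&& p.1 \in X, p.2 \in Y, p \in L, p.1 != i & p.2 != j]]).
  + case/existsP => -[i' j'] /and5P [/= i'X j'Y ijL' ii jj].
    exists (exist _ i iX), (exist _ i' i'X), j, j'; split => //.
    * by apply: contra ii => /eqP [->].
    * by rewrite eq_sym.
    * move=> f fB fa fc; rewrite /good_diag; apply/negP => /eqP h1.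
      have : (1 < #|[set x : elX X | (val x, f x) \in L]|)%N.
        rewrite (cardsD1 (exist _ i iX)) inE /= fa ijL add1n ltnS card_gt0.
        apply/set0Pn; exists (exist _ i' i'X); rewrite !inE /= fc ijL' andbT.
        by apply: contra ii => /eqP [->].
      by rewrite h1.
  + rewrite negb_exists => /forallP Hoff.
    have [b bY biL] := rowN i iX.
    have [a aX ajL] := colN j jY.
    have bj : b != j by apply: contra biL => /eqP ->.
    have ai : a != i by apply: contra ajL => /eqP ->.
    exists (exist _ i iX), (exist _ a aX), b, j; split => //.
    * by apply: contra ai => /eqP [->].
    * move=> f fB fa fc; apply: small => x.
      case: (eqVneq x (exist _ i iX)) => [-> | xi]; first by rewrite /= fa.
      case: (eqVneq x (exist _ a aX)) => [-> | xa]; first by rewrite /= fc.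
      apply/negP => xL.
      have := Hoff (val x, f x).
      move: fB; rewrite /bijections !inE => /andP[/forallP fY /injectiveP finj].
      rewrite /= (valP x) xL fY /=.
      have -> : val x != i by apply: contra xi => /eqP e; apply/eqP/val_inj.
      have -> : f x != j by rewrite -fc (inj_eq finj).
      done.
- rewrite negb_exists => /forallP Hno.
  have [x1 [x2 [x1X x2X x12]]] := @two_elems _ X h2.
  have [y1 [y2 [y1Y y2Y y12]]] := @two_elems _ Y (leq_trans h2 (eq_leq XY)).
  exists (exist _ x1 x1X), (exist _ x2 x2X), y1, y2; split => //.
  + move=> f fB _ _; apply: small => x; apply/negP => xL.
    move: fB; rewrite /bijections !inE => /andP[/forallP fY _].
    by have := Hno (val x, f x); rewrite /= (valP x) fY xL.
Qed.

From Stdlib Require Import Classical.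
From mathcomp Require Import zify.

Theorem lemma2p14 (R : realFieldType) (T : Type) (n : nat) (A : 'M[T]_n)
    (L : {set 'I_n * 'I_n}) (X Y : {set 'I_n}) (q : R) :
  #|X| = #|Y| ->
  (2 <= #|X|)%N ->
  q < 1 / ((#|X|)%:R * ((#|X|)%:R - 1)) ->
  q_good L X Y q ->
  has_0strong_line L X Y.
Proof.
move=> XY h2 hq hg; apply: NNPP => Hn.
have [a [c [b [d [ac bd bY dY Hbad]]]]] := @config n L X Y Hn h2 XY.
have hN := @card_bij n X Y a c b d ac bd bY dY.
rewrite card_Pairs -XY in hN.
set m := #|X| in h2 hq hN.
set N := #|bijections X Y| in hN.
set s := #|@Sfib n X Y a c b d| in hN.
have sN : (s <= N)%N.
  apply: subset_leq_card; apply/subsetP => f; rewrite inE => /andP[].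
  done.
have hG : (#|[set f in bijections X Y | good_diag L f]| <= N - s)%N.
  rewrite /N /s -(setIidPr (_ : @Sfib n X Y a c b d \subset bijections X Y)); last first.
    by apply/subsetP => f; rewrite inE => /andP[].
  rewrite -cardsD; apply: subset_leq_card; apply/subsetP => f.
  rewrite inE => /andP[fB fg]; rewrite in_setD fB andbT /Sfib inE fB /=.
  by apply/negP => /andP[/eqP fa /eqP fc]; move: fg; rewrite (negbTE (Hbad f fB fa fc)).
move: hg; rewrite /q_good /prob_good -/N.
set G := #|[set f in bijections X Y | good_diag L f]| in hG *.
have GsN : (G + s <= N)%N by lia.
have M2 : (2 <= m * m - m)%N by nia.
have MR : (m%:R * (m%:R - 1) : R) = (m * m - m)%N%:R.
  by rewrite natrB ?natrM; [rewrite mulrBr mulr1 | nia].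
rewrite MR in hq.
have Mpos : (0 : R) < (m * m - m)%N%:R by rewrite ltr0n; lia.
rewrite ltr_pdivlMr // in hq.
set Mr := ((m * m - m)%N%:R : R) in hq Mpos.
have M2R : (2 : R) <= Mr by rewrite /Mr (ler_nat R 2).
have hNR : (N%:R : R) <= s%:R * Mr by rewrite /Mr -natrM ler_nat.
have GsR : (G%:R + s%:R : R) <= N%:R by rewrite -natrD ler_nat.
have s0 : (0 : R) <= s%:R by [].
have G0 : (0 : R) <= G%:R by [].
clearbody Mr.
case: (posnP N) => [N0 | Npos].
  rewrite N0 invr0 mulr0 => h1.
  have h0 : 0 <= (q - 1) * Mr by apply: mulr_ge0; lra.
  clear -hq M2R h1 h0; nra.
have NposR : (0 : R) < N%:R by rewrite ltr0n.
rewrite ler_pdivlMr // => h1.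
clear -hq Mpos hNR GsR s0 G0 NposR h1.
move: hNR GsR s0 G0 NposR h1.
move: (N%:R : R) (s%:R : R) (G%:R : R) => NR sR GR hNR GsR s0 G0 NposR h1.
have h3 : 0 < (1 - q * Mr) * NR by apply: mulr_gt0; lra.
have h4 : sR <= q * NR by nra.
have h5 : sR * Mr <= q * NR * Mr by rewrite ler_pM2r.
nra.
Qed.
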